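(* The relation $\prec$ on phasers, restricted to the set $\mathcal{P}^{WO}$ of well-ordered phasers, is a causality relation: (i) for all $P,Q,R\in\mathcal{P}^{WO}$, if $P\prec Q$ and $Q\prec R$ then $P\prec R$; (ii) for all $P\in\mathcal{P}^{WO}$, $\neg(P\prec P)$; (iii) for all $P,Q\in\mathcal{P}^{WO}$, if $P\prec Q$ then $\neg(Q\prec P)$.
   Context: A view is a record $v=(\mathrm{sp}(v),\mathrm{wp}(v),\mathrm{mode}(v))$ with $\mathrm{sp}(v),\mathrm{wp}(v)\in\mathbb{N}$ and $\mathrm{mode}(v)\in\{\mathtt{SW},\mathtt{SO},\mathtt{WO}\}$. $\mathrm{CanSignal}(v)$ iff $\mathrm{mode}(v)\in\{\mathtt{SW},\mathtt{SO}\}$; $\mathrm{CanWait}(v)$ iff $\mathrm{mode}(v)\in\{\mathtt{SW},\mathtt{WO}\}$. A phaser $P$ is a finite partial map from task identifiers to views. For views, $v_1\prec v_2$ iff $\mathrm{CanSignal}(v_1)$, $\mathrm{sp}(v_1)<\mathrm{wp}(v_2)$ and $\mathrm{CanWait}(v_2)$; and $v_1\unrhd v_2$ iff $\mathrm{mode}(v_1)=\mathtt{WO}$ or $\mathrm{sp}(v_1)\ge\mathrm{wp}(v_2)$ or $\mathrm{mode}(v_2)=\mathtt{SO}$. For phasers, $P\prec Q$ iff there exist $t\in\mathrm{dom}\,P$, $t'\in\mathrm{dom}\,Q$ with $P(t)\prec Q(t')$; $P\unrhd Q$ iff $P(t)\unrhd Q(t')$ for all $t\in\mathrm{dom}\,P$,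 $t'\in\mathrm{dom}\,Q$. $P$ is well-ordered iff $P\unrhd P$. *)

(* Defs.v *)
From mathcomp Require Import all_boot.
From mathcomp Require Import finmap.
Set Implicit Arguments. Unset Strict Implicit. Unset Printing Implicit Defensive.
Local Open Scope fmap_scope.

Inductive mode := SW | SO | WO.

Record view := View { sp : nat; wp : nat; vmode : mode }.

Definition CanSignal (v : view) : Prop := vmode v = SW \/ vmode v = SO.
Definition CanWait (v : view) : Prop := vmode v = SW \/ vmode v = WO.

Definition view_prec (v1 v2 : view) : Prop :=
  CanSignal v1 /\ sp v1 < wp v2 /\ CanWait v2.

Definition view_ge (v1 v2 : view) : Prop :=
  vmode v1 = WO \/ wp v2 <= sp v1 \/ vmode v2 = SO.

(* A phaser: finite partial map from task identifiers (of type T) to views. *)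
Definition phaser (T : choiceType) := {fmap T -> view}.

Definition phaser_prec (T : choiceType) (P Q : phaser T) : Prop :=
  exists t t' v v', P.[? t] = Some v /\ Q.[? t'] = Some v' /\ view_prec v v'.

Definition phaser_ge (T : choiceType) (P Q : phaser T) : Prop :=
  forall t t' v v', P.[? t] = Some v -> Q.[? t'] = Some v' -> view_ge v v'.

Definition well_ordered (T : choiceType) (P : phaser T) : Prop := phaser_ge P P.

(* Main.v *)
Require Import Defs.
From mathcomp Require Import all_boot.
From mathcomp Require Import finmap.
From Stdlib Require Import Lia.

Lemma vge_link (v1 v2 : view) : view_ge v1 v2 -> CanSignal v1 -> CanWait v2 ->
  (wp v2 <= sp v1)%coq_nat.
Proof.
  move=> [H|[H|H]] [S|S] [W|W]; rewrite ?H in S W; try discriminate; by apply/leP.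
Qed.

Lemma trans_gen (T : choiceType) (P Q R : phaser T) : well_ordered Q ->
  phaser_prec P Q -> phaser_prec Q R -> phaser_prec P R.
Proof.
  move=> wQ [t [t1 [v [v1 [Hv [Hv1 [S1 [L1 W1]]]]]]]]
            [t2 [t3 [v2 [v3 [Hv2 [Hv3 [S2 [L2 W2]]]]]]]].
  exists t, t3, v, v3; do 2 split => //.
  have := @vge_link _ _ (wQ _ _ _ _ Hv2 Hv1) S2 W1.
  move/ltP: L1; move/ltP: L2 => L2 L1 H.
  split => //; split => //; apply/ltP; lia.
Qed.

Theorem theorem1 (T : choiceType) :
  (forall P Q R : phaser T, well_ordered P -> well_ordered Q -> well_ordered R ->
     phaser_prec P Q -> phaser_prec Q R -> phaser_prec P R) /\
  (forall P : phaser T, well_ordered P -> ~ phaser_prec P P) /\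
  (forall P Q : phaser T, well_ordered P -> well_ordered Q ->
     phaser_prec P Q -> ~ phaser_prec Q P).
Proof.
  have irr : forall P : phaser T, well_ordered P -> ~ phaser_prec P P.
    move=> P wP [t [t1 [v [v1 [Hv [Hv1 [S1 [L1 W1]]]]]]]].
    have := @vge_link _ _ (wP _ _ _ _ Hv Hv1) S1 W1.
    move/ltP: L1 => L1 H; lia.
  split; last split.
  - move=> P Q R _ wQ _; exact: trans_gen.
  - exact: irr.
  - move=> P Q wP wQ H1 H2; apply: (irr P wP); exact: (@trans_gen T P Q P wQ H1 H2).
Qed.
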